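(* Let $p,q>1$ be real numbers with $\frac1p+\frac1q=1$, let $n\ge1$ and let $a_1,\dots,a_n,b_1,\dots,b_n>0$. Put $S_a=\sum_{j=1}^n a_j^p$, $S_b=\sum_{j=1}^n b_j^q$, $$A=\frac{1}{2pq}S_a^{1/p}S_b^{1/q}\sum_{i=1}^n \left(\frac{a_i^p}{S_a}-\frac{b_i^q}{S_b}\right)^2,$$ $$m=\min_{1\le i\le n}\min\left\{\frac{a_i^p}{S_a},\ \frac{b_i^q}{S_b}\right\},\qquad M=\max_{1\le i\le n}\max\left\{\frac{a_i^p}{S_a},\ \frac{b_i^q}{S_b}\right\}.$$ Then $$\frac{A}{M}\leq S_a^{1/p}S_b^{1/q}-\sum_{i=1}^n a_ib_i\leq\frac{A}{m}.$$ *)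

(* Defs.v *)
From Stdlib Require Import Reals List.
Open Scope R_scope.

(* sumR n f = f 1 + ... + f n  (indices 1..n, as in the paper) *)
Fixpoint sumR (n : nat) (f : nat -> R) : R :=
  match n with
  | O => 0
  | S k => sumR k f + f (S k)
  end.

(* minimum / maximum of f 1, ..., f n (meaningful for n >= 1) *)
Definition minR (n : nat) (f : nat -> R) : R :=
  fold_right Rmin (f 1%nat) (map f (seq 1 n)).
Definition maxR (n : nat) (f : nat -> R) : R :=
  fold_right Rmax (f 1%nat) (map f (seq 1 n)).

(* Main.v *)
Require Import Defs.
From Stdlib Require Import Reals Lra Lia List.
Open Scope R_scope.

Lemma ln_le_sub1 t : 0 < t -> ln t <= t - 1.
Proof. intros Ht. pose proof (exp_ineq1_le (ln t)). rewrite exp_ln in H; lra. Qed.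

Lemma bern t r : 0 < t -> r < 0 -> 1 + r * (t - 1) <= Rpower t r.
Proof.
  intros Ht Hr. unfold Rpower. pose proof (exp_ineq1_le (r * ln t)).
  pose proof (ln_le_sub1 t Ht). assert (r * (t-1) <= r * ln t) by nra. lra.
Qed.

Lemma hder (al be mu c : R) : 0 < c ->
  derivable_pt_lim (fun t => al * t + be * ((t - 1) * (t - 1)) - Rpower t mu) c
    (al + be * (2 * (c - 1)) - mu * Rpower c (mu - 1)).
Proof.
  intros Hc.
  assert (D1 : derivable_pt_lim (fun t => al * t) c (al)).
  { assert (H := derivable_pt_lim_mult (fun _ => al) (fun t => t) c 0 1
      (derivable_pt_lim_const al c) (derivable_pt_lim_id c)).
    unfold mult_fct in H. replace (0 * c + al * 1) with al in H by ring. exact H. }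
  assert (D2 : derivable_pt_lim (fun t => t - 1) c 1).
  { assert (H := derivable_pt_lim_minus (fun t => t) (fun _ => 1) c 1 0
      (derivable_pt_lim_id c) (derivable_pt_lim_const 1 c)).
    unfold minus_fct in H. replace (1 - 0) with 1 in H by ring. exact H. }
  assert (D3 : derivable_pt_lim (fun t => (t - 1) * (t - 1)) c (2 * (c - 1))).
  { assert (H := derivable_pt_lim_mult _ _ c _ _ D2 D2).
    unfold mult_fct in H. replace (1 * (c - 1) + (c - 1) * 1) with (2 * (c - 1)) in H by ring. exact H. }
  assert (D4 : derivable_pt_lim (fun t => be * ((t - 1) * (t - 1))) c (be * (2 * (c - 1)))).
  { assert (H := derivable_pt_lim_mult (fun _ => be) _ c _ _ (derivable_pt_lim_const be c) D3).
    unfold mult_fct in H. replace (0 * ((c-1)*(c-1)) + be * (2 * (c - 1))) with (be * (2 * (c - 1))) in H by ring. exact H. }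
  assert (D5 := derivable_pt_lim_plus _ _ c _ _ D1 D4). unfold plus_fct in D5.
  assert (D6 := derivable_pt_lim_minus _ _ c _ _ D5 (derivable_pt_lim_power c mu Hc)).
  unfold minus_fct in D6. exact D6.
Qed.

Lemma Rpower_1l mu : Rpower 1 mu = 1.
Proof. unfold Rpower. rewrite ln_1, Rmult_0_r, exp_0. reflexivity. Qed.

Lemma coreU mu t : 0 < mu < 1 -> 1 <= t ->
  mu * t + (1 - mu) - Rpower t mu <= mu * (1 - mu) * ((t - 1) * (t - 1)) / 2.
Proof.
  intros Hm Ht. destruct (Req_dec t 1) as [->|Hne].
  { rewrite Rpower_1l. lra. }
  set (al := mu). set (be := - (mu * (1 - mu) / 2)).
  destruct (MVT_cor2 (fun t => al * t + be * ((t - 1) * (t - 1)) - Rpower t mu)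
    (fun c => al + be * (2 * (c - 1)) - mu * Rpower c (mu - 1)) 1 t) as [c [Hc1 Hc2]].
  { lra. }
  { intros c Hc. apply hder. lra. }
  rewrite Rpower_1l in Hc1.
  pose proof (bern c (mu - 1) ltac:(lra) ltac:(lra)).
  assert (al + be * (2 * (c - 1)) - mu * Rpower c (mu - 1) <= 0).
  { unfold al, be. nra. }
  assert ((al + be * (2 * (c - 1)) - mu * Rpower c (mu - 1)) * (t - 1) <= 0) by nra.
  unfold al, be in *. nra.
Qed.

Lemma coreL mu s : 0 < mu < 1 -> 0 < s <= 1 ->
  mu * (1 - mu) * ((s - 1) * (s - 1)) / 2 <= mu * s + (1 - mu) - Rpower s mu.
Proof.
  intros Hm Hs. destruct (Req_dec s 1) as [->|Hne].
  { rewrite Rpower_1l. lra. }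
  set (al := mu). set (be := - (mu * (1 - mu) / 2)).
  destruct (MVT_cor2 (fun t => al * t + be * ((t - 1) * (t - 1)) - Rpower t mu)
    (fun c => al + be * (2 * (c - 1)) - mu * Rpower c (mu - 1)) s 1) as [c [Hc1 Hc2]].
  { lra. }
  { intros c Hc. apply hder. lra. }
  rewrite Rpower_1l in Hc1.
  pose proof (bern c (mu - 1) ltac:(lra) ltac:(lra)).
  assert (al + be * (2 * (c - 1)) - mu * Rpower c (mu - 1) <= 0).
  { unfold al, be. nra. }
  assert ((al + be * (2 * (c - 1)) - mu * Rpower c (mu - 1)) * (1 - s) <= 0) by nra.
  unfold al, be in *. nra.
Qed.

Lemma ident a b mu : 0 < a -> 0 < b -> b * Rpower (a / b) mu = Rpower a mu * Rpower b (1 - mu).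
Proof.
  intros Ha Hb. unfold Rpower. unfold Rdiv. rewrite ln_mult, ln_Rinv by (auto; apply Rinv_0_lt_compat; auto).
  rewrite <- (exp_ln b) at 1 by auto. rewrite <- !exp_plus. f_equal. ring.
Qed.

Lemma scaledU a b mu : 0 < mu < 1 -> 0 < b -> b <= a ->
  mu * a + (1 - mu) * b - Rpower a mu * Rpower b (1 - mu) <= mu * (1 - mu) / (2 * b) * (a - b) ^ 2.
Proof.
  intros Hm Hb Hab. rewrite <- ident by lra.
  assert (H := coreU mu (a / b) Hm).
  assert (1 <= a / b). { apply (Rmult_le_reg_r b); [lra|]. unfold Rdiv. rewrite Rmult_assoc, Rinv_l; lra. }
  specialize (H H0). apply (Rmult_le_compat_l b) in H; [|lra].
  replace (mu * a + (1 - mu) * b - b * Rpower (a / b) mu) with (b * (mu * (a / b) + (1 - mu) - Rpower (a / b) mu)) by (field; lra).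
  replace (mu * (1 - mu) / (2 * b) * (a - b) ^ 2) with (b * (mu * (1 - mu) * ((a / b - 1) * (a / b - 1)) / 2)) by (field; lra).
  exact H.
Qed.

Lemma scaledL a b mu : 0 < mu < 1 -> 0 < a -> a <= b ->
  mu * (1 - mu) / (2 * b) * (a - b) ^ 2 <= mu * a + (1 - mu) * b - Rpower a mu * Rpower b (1 - mu).
Proof.
  intros Hm Ha Hab. rewrite <- ident by lra.
  assert (H := coreL mu (a / b) Hm).
  assert (0 < a / b <= 1). { split. apply Rdiv_lt_0_compat; lra.
    apply (Rmult_le_reg_r b); [lra|]. unfold Rdiv. rewrite Rmult_assoc, Rinv_l; lra. }
  specialize (H H0). apply (Rmult_le_compat_l b) in H; [|lra].
  replace (mu * a + (1 - mu) * b - b * Rpower (a / b) mu) with (b * (mu * (a / b) + (1 - mu) - Rpower (a / b) mu)) by (field; lra).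
  replace (mu * (1 - mu) / (2 * b) * (a - b) ^ 2) with (b * (mu * (1 - mu) * ((a / b - 1) * (a / b - 1)) / 2)) by (field; lra).
  exact H.
Qed.

Lemma denom_le c u v N : 0 <= c -> 0 < u -> u <= v -> 0 <= N -> c / (2 * v) * N <= c / (2 * u) * N.
Proof.
  intros Hc Hu Huv HN. apply Rmult_le_compat_r; auto. unfold Rdiv. apply Rmult_le_compat_l; auto.
  apply Rinv_le_contravar; lra.
Qed.

Lemma pointwise l mu x y m M : 0 < l -> l + mu = 1 -> 0 < mu -> 0 < m ->
  m <= x -> m <= y -> x <= M -> y <= M ->
  l * mu / (2 * M) * (x - y) ^ 2 <= l * x + mu * y - Rpower x l * Rpower y mu
  /\ l * x + mu * y - Rpower x l * Rpower y mu <= l * mu / (2 * m) * (x - y) ^ 2.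
Proof.
  intros Hl Hlm Hmu Hm Hx Hy HX HY.
  assert (Hsq : 0 <= (x - y) ^ 2) by apply pow2_ge_0.
  assert (Hc : 0 <= l * mu) by nra.
  replace mu with (1 - l) in * by lra.
  assert (Hl1 : 0 < l < 1) by lra.
  assert (Hl2 : 0 < 1 - l < 1) by lra.
  assert (E1 : (y - x) ^ 2 = (x - y) ^ 2) by ring.
  assert (E2 : forall u v, (1 - l) * u + (1 - (1 - l)) * v - Rpower u (1 - l) * Rpower v (1 - (1 - l)) = l * v + (1 - l) * u - Rpower v l * Rpower u (1 - l)).
  { intros. replace (1 - (1 - l)) with l by ring. ring. }
  assert (E3 : forall u, (1 - l) * (1 - (1 - l)) / (2 * u) = l * (1 - l) / (2 * u)).
  { intros. replace (1 - (1 - l)) with l by ring. f_equal; ring. }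
  destruct (Rle_dec y x).
  - split.
    + pose proof (scaledL y x (1 - l) Hl2 ltac:(lra) r) as H.
      rewrite E1, E2, E3 in H.
      apply Rle_trans with (l * (1 - l) / (2 * x) * (x - y) ^ 2); [apply denom_le; lra|exact H].
    + pose proof (scaledU x y l Hl1 ltac:(lra) r) as H.
      eapply Rle_trans; [exact H|]. apply denom_le; lra.
  - split.
    + pose proof (scaledL x y l Hl1 ltac:(lra) ltac:(lra)) as H.
      apply Rle_trans with (l * (1 - l) / (2 * y) * (x - y) ^ 2); [apply denom_le; lra|exact H].
    + pose proof (scaledU y x (1 - l) Hl2 ltac:(lra) ltac:(lra)) as H.
      rewrite E1, E2, E3 in H.
      eapply Rle_trans; [exact H|]. apply denom_le; lra.
Qed.

Lemma sumR_ext n f g : (forall i, (1 <= i <= n)%nat -> f i = g i) -> sumR n f = sumR n g.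
Proof.
  induction n; intros H; simpl; auto.
  rewrite IHn by (intros; apply H; lia). rewrite H by lia. reflexivity.
Qed.

Lemma sumR_le n f g : (forall i, (1 <= i <= n)%nat -> f i <= g i) -> sumR n f <= sumR n g.
Proof.
  induction n; intros H; simpl; [lra|].
  pose proof (IHn ltac:(intros; apply H; lia)). pose proof (H (S n) ltac:(lia)). lra.
Qed.

Lemma sumR_pos n f : (1 <= n)%nat -> (forall i, (1 <= i <= n)%nat -> 0 < f i) -> 0 < sumR n f.
Proof.
  induction n; intros Hn H; [lia|]. simpl.
  destruct (Nat.eq_dec n 0) as [->|Hn0].
  - simpl. pose proof (H 1%nat ltac:(lia)). lra.
  - pose proof (IHn ltac:(lia) ltac:(intros; apply H; lia)). pose proof (H (S n) ltac:(lia)). lra.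
Qed.

Lemma sumR_scal n c f : sumR n (fun i => c * f i) = c * sumR n f.
Proof. induction n; simpl; [ring|]. rewrite IHn. ring. Qed.

Lemma sumR_div n c f : sumR n (fun i => f i / c) = sumR n f / c.
Proof. induction n; simpl; [unfold Rdiv; ring|]. rewrite IHn. unfold Rdiv; ring. Qed.

Lemma sumR_lin n al be f g h : sumR n (fun i => al * f i + be * g i - h i) = al * sumR n f + be * sumR n g - sumR n h.
Proof. induction n; simpl; [ring|]. rewrite IHn. ring. Qed.

Lemma fold_min l d : fold_right Rmin d l <= d /\ forall z, In z l -> fold_right Rmin d l <= z.
Proof.
  induction l as [|a l IH]; simpl; split; try lra; try tauto.
  - destruct IH. eapply Rle_trans; [apply Rmin_r|auto].
  - intros z [<-|Hz]; [apply Rmin_l|]. destruct IH. eapply Rle_trans; [apply Rmin_r|auto].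
Qed.

Lemma fold_max l d : d <= fold_right Rmax d l /\ forall z, In z l -> z <= fold_right Rmax d l.
Proof.
  induction l as [|a l IH]; simpl; split; try lra; try tauto.
  - destruct IH. eapply Rle_trans; [|apply Rmax_r]; auto.
  - intros z [<-|Hz]; [apply Rmax_l|]. destruct IH. eapply Rle_trans; [|apply Rmax_r]; auto.
Qed.

Lemma fold_min_pos l d : 0 < d -> (forall z, In z l -> 0 < z) -> 0 < fold_right Rmin d l.
Proof.
  induction l as [|a l IH]; simpl; intros Hd H; auto.
  apply Rmin_glb_lt; auto.
Qed.

Lemma in_range n (f : nat -> R) i : (1 <= i <= n)%nat -> In (f i) (map f (seq 1 n)).
Proof. intros Hi. apply in_map. apply in_seq. lia. Qed.

Lemma minR_le n f i : (1 <= i <= n)%nat -> minR n f <= f i.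
Proof. intros Hi. unfold minR. apply (proj2 (fold_min _ _)). apply in_range; auto. Qed.

Lemma maxR_ge n f i : (1 <= i <= n)%nat -> f i <= maxR n f.
Proof. intros Hi. unfold maxR. apply (proj2 (fold_max _ _)). apply in_range; auto. Qed.

Lemma minR_pos n f : (1 <= n)%nat -> (forall i, (1 <= i <= n)%nat -> 0 < f i) -> 0 < minR n f.
Proof.
  intros Hn H. unfold minR. apply fold_min_pos. apply H; lia.
  intros z Hz. apply in_map_iff in Hz. destruct Hz as [i [<- Hi]]. apply in_seq in Hi. apply H; lia.
Qed.

Lemma Rpower_pos x y : 0 < Rpower x y.
Proof. unfold Rpower. apply exp_pos. Qed.

Theorem mainTheorem3 (p q : R) (n : nat) (a b : nat -> R)
  (hp : 1 < p) (hq : 1 < q) (hpq : 1 / p + 1 / q = 1) (hn : (1 <= n)%nat)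
  (ha : forall i, (1 <= i <= n)%nat -> 0 < a i)
  (hb : forall i, (1 <= i <= n)%nat -> 0 < b i) :
  let Sa := sumR n (fun j => Rpower (a j) p) in
  let Sb := sumR n (fun j => Rpower (b j) q) in
  let A := / (2 * p * q) * Rpower Sa (1 / p) * Rpower Sb (1 / q) *
           sumR n (fun i => (Rpower (a i) p / Sa - Rpower (b i) q / Sb) ^ 2) in
  let m := minR n (fun i => Rmin (Rpower (a i) p / Sa) (Rpower (b i) q / Sb)) in
  let M := maxR n (fun i => Rmax (Rpower (a i) p / Sa) (Rpower (b i) q / Sb)) in
  A / M <= Rpower Sa (1 / p) * Rpower Sb (1 / q) - sumR n (fun i => a i * b i)
  /\ Rpower Sa (1 / p) * Rpower Sb (1 / q) - sumR n (fun i => a i * b i) <= A / m.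
Proof.
  intros Sa Sb A m M.
  assert (HSa : 0 < Sa) by (apply sumR_pos; auto; intros; apply Rpower_pos).
  assert (HSb : 0 < Sb) by (apply sumR_pos; auto; intros; apply Rpower_pos).
  pose (x := fun i => Rpower (a i) p / Sa).
  pose (y := fun i => Rpower (b i) q / Sb).
  pose (K := Rpower Sa (1 / p) * Rpower Sb (1 / q)).
  assert (HK : 0 < K) by (unfold K; pose proof (Rpower_pos Sa (1/p)); pose proof (Rpower_pos Sb (1/q)); nra).
  assert (Hx : forall i, 0 < x i) by (intros; unfold x; apply Rdiv_lt_0_compat; auto; apply Rpower_pos).
  assert (Hy : forall i, 0 < y i) by (intros; unfold y; apply Rdiv_lt_0_compat; auto; apply Rpower_pos).
  assert (Hsx : sumR n x = 1).
  { unfold x. rewrite sumR_div. fold Sa. field. lra. }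
  assert (Hsy : sumR n y = 1).
  { unfold y. rewrite sumR_div. fold Sb. field. lra. }
  assert (Hp0 : 0 < p) by lra. assert (Hq0 : 0 < q) by lra.
  assert (Hrt : forall c r, 0 < c -> 0 < r -> Rpower (Rpower c r) (1 / r) = c).
  { intros c r Hc Hr. rewrite Rpower_mult. replace (r * (1 / r)) with 1 by (field; lra). apply Rpower_1; auto. }
  assert (Hab : forall i, (1 <= i <= n)%nat -> a i * b i = K * (Rpower (x i) (1 / p) * Rpower (y i) (1 / q))).
  { intros i Hi. unfold K, x, y.
    rewrite <- (Hrt (a i) p) at 1 by auto. rewrite <- (Hrt (b i) q) at 1 by auto.
    replace (Rpower (a i) p) with (Sa * (Rpower (a i) p / Sa)) at 1 by (field; lra).
    replace (Rpower (b i) q) with (Sb * (Rpower (b i) q / Sb)) at 1 by (field; lra).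
    rewrite <- (Rpower_mult_distr Sa) by (auto; apply Rdiv_lt_0_compat; auto; apply Rpower_pos).
    rewrite <- (Rpower_mult_distr Sb) by (auto; apply Rdiv_lt_0_compat; auto; apply Rpower_pos).
    ring. }
  assert (HD : K - sumR n (fun i => a i * b i) =
     K * sumR n (fun i => 1 / p * x i + 1 / q * y i - Rpower (x i) (1 / p) * Rpower (y i) (1 / q))).
  { rewrite (sumR_ext n _ (fun i => K * (Rpower (x i) (1 / p) * Rpower (y i) (1 / q)))) by auto.
    rewrite sumR_scal, sumR_lin, Hsx, Hsy. replace (1 / p * 1 + 1 / q * 1) with 1 by lra. ring. }
  assert (Hm0 : 0 < m).
  { apply minR_pos; auto. intros. apply Rmin_glb_lt; [apply (Hx i)|apply (Hy i)]. }
  assert (Hmx : forall i, (1 <= i <= n)%nat -> m <= x i /\ m <= y i).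
  { intros i Hi. assert (H : m <= Rmin (x i) (y i)) by exact (minR_le n (fun i => Rmin (x i) (y i)) i Hi).
    split; eapply Rle_trans; [exact H|apply Rmin_l|exact H|apply Rmin_r]. }
  assert (HMx : forall i, (1 <= i <= n)%nat -> x i <= M /\ y i <= M).
  { intros i Hi. assert (H : Rmax (x i) (y i) <= M) by exact (maxR_ge n (fun i => Rmax (x i) (y i)) i Hi).
    split; eapply Rle_trans; [apply Rmax_l|exact H|apply Rmax_r|exact H]. }
  assert (HM0 : 0 < M).
  { destruct (HMx 1%nat ltac:(lia)). pose proof (Hx 1%nat). lra. }
  assert (Hl : 1 / p * (1 / q) = / (p * q)) by (field; lra).
  assert (HA : forall N, 0 < N -> A / N = K * sumR n (fun i => 1 / p * (1 / q) / (2 * N) * (x i - y i) ^ 2)).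
  { intros N HN. rewrite sumR_scal. unfold A, K. change (sumR n (fun i => (Rpower (a i) p / Sa - Rpower (b i) q / Sb) ^ 2)) with (sumR n (fun i => (x i - y i) ^ 2)).
    field. lra. }
  assert (Hpos : 0 < 1 / p) by (apply Rdiv_lt_0_compat; lra).
  assert (Hqos : 0 < 1 / q) by (apply Rdiv_lt_0_compat; lra).
  change (Rpower Sa (1 / p) * Rpower Sb (1 / q)) with K.
  rewrite HD, (HA M HM0), (HA m Hm0). split.
  - apply Rmult_le_compat_l; [lra|]. apply sumR_le. intros i Hi.
    destruct (Hmx i Hi), (HMx i Hi).
    exact (proj1 (pointwise (1/p) (1/q) (x i) (y i) m M Hpos hpq Hqos Hm0 H H0 H1 H2)).
  - apply Rmult_le_compat_l; [lra|]. apply sumR_le. intros i Hi.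
    destruct (Hmx i Hi), (HMx i Hi).
    exact (proj2 (pointwise (1/p) (1/q) (x i) (y i) m M Hpos hpq Hqos Hm0 H H0 H1 H2)).
Qed.
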